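(* Let $\Delta_1,\Delta_2,\Delta_3$ be simplicial complexes on $[n]$. For nonempty $A,B\subseteq[n]$ set $\Delta_{A,B}=(A*\Delta_1)\cup(B*\Delta_2)\cup((A\cup B)*\Delta_3)$. If $A,B,A',B'\subseteq[n]$ are nonempty with $A\cap B=\emptyset$, $A'\cap B'=\emptyset$, and neither $A\cup B$ nor $A'\cup B'$ meets the vertex set of $\Delta_1\cup\Delta_2\cup\Delta_3$, then $$\tilde H_i(\Delta_{A,B};\mathbb{K})\cong\tilde H_i(\Delta_{A',B'};\mathbb{K})\quad\text{for all } i>0.$$
   Context: A simplicial complex on $[n]$ is a finite family of subsets of $[n]$ closed under taking subsets (singletons need not belong to it); its vertex set is the union of its faces. For a nonempty $A\subseteq[n]$ and a simplicial complex $\Delta$ on $[n]$, the cone $A*\Delta$ is the simplicial complex whose facets are the sets $A\cup F$ with $F$ a facet of $\Delta$. $\tilde H_i(\,\cdot\,;\mathbb{K})$ denotes reduced simplicial homology with coefficients in the field $\mathbb{K}$. *)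

(* Defs.v *)
From mathcomp Require Import all_boot all_order all_algebra.
Set Implicit Arguments. Unset Strict Implicit. Unset Printing Implicit Defensive.
Import GRing.Theory.
Local Open Scope ring_scope.

Definition is_simplicial_complex n (D : {set {set 'I_n}}) : Prop :=
  forall s t : {set 'I_n}, s \in D -> t \subset s -> t \in D.

Definition vertex_set n (D : {set {set 'I_n}}) : {set 'I_n} :=
  \bigcup_(s in D) s.

(* cone A * D: the complex generated by the sets A :|: F, F a face (equivalently facet) of D *)
Definition cone n (A : {set 'I_n}) (D : {set {set 'I_n}}) : {set {set 'I_n}} :=
  [set t : {set 'I_n} | [exists s in D, t \subset A :|: s]].

Definition DeltaAB n (D1 D2 D3 : {set {set 'I_n}}) (A B : {set 'I_n}) :=
  cone A D1 :|: cone B D2 :|: cone (A :|: B) D3.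

(* Chains: row vectors indexed by all subsets of 'I_n (via enum_val);
   the i-chains of D are supported on faces of D of cardinality i+1
   (i = -1 not needed here; bnd 0 is the augmentation onto the empty face). *)
Notation NS n := #|{set 'I_n}|.

(* boundary matrix d_i : C_i -> C_{i-1}, acting on row vectors (u *m d) *)
Definition bnd (K : fieldType) n (D : {set {set 'I_n}}) (i : nat) : 'M[K]_(NS n) :=
  \matrix_(r, c)
    (let s := enum_val r in let t := enum_val c in
     if [&& s \in D, t \in D, #|s| == i.+1, #|t| == i & t \subset s]
     then \sum_(v in s :\: t) (-1) ^+ #|[set w in s | (val w < val v)%N]|
     else 0).

Definition chain_proj (K : fieldType) n (D : {set {set 'I_n}}) (i : nat) : 'M[K]_(NS n) :=
  \matrix_(r, c) ((r == c) && (enum_val r \in D) && (#|enum_val r| == i.+1))%:R.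

(* reduced cycles Z_i, boundaries B_i, and reduced homology H_i = Z_i / B_i,
   represented by a complement of B_i in Z_i *)
Definition cycles (K : fieldType) n D i : 'M[K]_(NS n) :=
  (chain_proj K D i :&: kermx (bnd K D i))%MS.
Definition boundaries (K : fieldType) n D i : 'M[K]_(NS n) := bnd K D i.+1.
Definition rhomology (K : fieldType) n (D : {set {set 'I_n}}) (i : nat) : 'M[K]_(NS n) :=
  (cycles K D i :\: boundaries K D i)%MS.

Definition mxspace_iso (K : fieldType) m (U V : 'M[K]_m) : Prop :=
  exists M : 'M[K]_m, M \in unitmx /\ (U *m M == V)%MS.

(* Main.v *)
Require Import Defs.
From mathcomp Require Import all_boot all_order all_algebra all_fingroup.
From mathcomp Require Import zify.
Set Implicit Arguments. Unset Strict Implicit. Unset Printing Implicit Defensive.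
Import GRing.Theory.
Local Open Scope ring_scope.

Lemma iso_of_rank (K : fieldType) m (U V : 'M[K]_m) :
  \rank U = \rank V -> mxspace_iso U V.
Proof.
move=> rUV.
exists (invmx (row_ebase U) *m row_ebase V); split.
  by rewrite unitmx_mul unitmx_inv !row_ebase_unit.
have eU : U *m (invmx (row_ebase U) *m row_ebase V) =
          col_ebase U *m (pid_mx (\rank V) *m row_ebase V).
  by rewrite -{1}(mulmx_ebase U) !mulmxA mulmxK ?row_ebase_unit // rUV.
rewrite eU.
have h1 := @eqmxMfull _ _ _ _ (col_ebase U) (pid_mx (\rank V) *m row_ebase V)
   (etrans (row_full_unit _) (col_ebase_unit U)).
have h2 := @eqmxMfull _ _ _ _ (col_ebase V) (pid_mx (\rank V) *m row_ebase V)
   (etrans (row_full_unit _) (col_ebase_unit V)).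
have h3 : col_ebase V *m (pid_mx (\rank V) *m row_ebase V) = V
  by rewrite mulmxA mulmx_ebase.
rewrite h3 in h2.
apply/eqmxP; exact: (eqmx_trans h1 (eqmx_sym h2)).
Qed.

Section Basics.
Variable K : fieldType.
Variable n : nat.
Implicit Types (D : {set {set 'I_n}}) (s t u : {set 'I_n}).

Definition sg s (v : 'I_n) : K := (-1) ^+ #|[set w in s | (val w < val v)%N]|.

Definition bd D (i : nat) s t : K :=
  if [&& s \in D, t \in D, #|s| == i.+1, #|t| == i & t \subset s]
  then \sum_(v in s :\: t) sg s v else 0.

Lemma bndE D i r c : bnd K D i r c = bd D i (enum_val r) (enum_val c).
Proof. by rewrite mxE. Qed.

Lemma sum_enum (F : {set 'I_n} -> K) :
  \sum_(m < NS n) F (enum_val m) = \sum_(t : {set 'I_n}) F t.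
Proof.
rewrite (reindex (@enum_rank _)) /=; last first.
  by exists enum_val => x _; rewrite ?enum_valK ?enum_rankK.
by apply: eq_bigr => t _; rewrite enum_rankK.
Qed.

Lemma diff1 s t : t \subset s -> #|s| = #|t|.+1 ->
  exists x, [/\ x \in s, x \notin t, t = s :\ x & s :\: t = [set x]].
Proof.
move=> ts cs.
have : #|s :\: t| == 1%N.
  by rewrite cardsD (setIidPr ts) cs subSnn.
case/cards1P=> x ex.
have xst : x \in s :\: t by rewrite ex set11.
move: (xst); rewrite inE => /andP[xt xs].
exists x; split => //.
apply/setP=> y; rewrite !inE.
case: (boolP (y \in t)) => yt.
  rewrite (subsetP ts y yt) andbT; apply/esym/negP => /eqP eyx.
  by move: xt; rewrite -eyx yt.
case: (boolP (y \in s)) => ys; rewrite ?andbF //.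
have : y \in s :\: t by rewrite inE yt ys.
by rewrite ex inE => ->.
Qed.

Lemma bd_val D i s t x : s \in D -> t \in D -> #|s| = i.+1 -> t = s :\ x -> x \in s ->
  bd D i s t = sg s x.
Proof.
move=> sD tD cs et xs.
have ct : #|t| = i by move: cs; rewrite (cardsD1 x s) xs et add1n => -[].
have e2 : s :\: (s :\ x) = [set x].
  apply/setP=> y; rewrite !inE; case: (y =P x) => [->|/eqP nyx]; first by rewrite xs /= ?eqxx ?andbT; idtac.
  by rewrite /= ?andNb.
rewrite /bd sD tD cs ct !eqxx /= et subD1set e2.
by rewrite big_set1.
Qed.

Lemma bd_nz D i s t : bd D i s t != 0 ->
  [/\ s \in D, t \in D, #|s| = i.+1, #|t| = i & exists x, x \in s /\ t = s :\ x].
Proof.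
rewrite /bd; case: and5P => [[sD tD /eqP cs /eqP ct ts] _|]; last by rewrite eqxx.
split => //.
have [x [xs _ et _]] := diff1 ts (etrans cs (congr1 S (esym ct))).
by exists x.
Qed.

End Basics.
Section DD.
Variable K : fieldType.
Variable n : nat.
Implicit Types (D : {set {set 'I_n}}) (s t u : {set 'I_n}).

Lemma sg_rem_gt s (v w : 'I_n) : (val v < val w)%N -> sg K (s :\ w) v = sg K s v.
Proof.
move=> vw; rewrite /sg.
suff -> : [set x in s :\ w | (val x < val v)%N] = [set x in s | (val x < val v)%N] by [].
apply/setP=> x; rewrite !inE.
case: (boolP (val x < val v)%N) => xv; rewrite ?andbF ?andbT //.
have : x != w by apply/eqP=> exw; move: xv; rewrite exw => /(ltn_trans vw); rewrite ltnn.
by move=> ->.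
Qed.

Lemma sg_rem_lt s (v w : 'I_n) : v \in s -> (val v < val w)%N ->
  sg K (s :\ v) w = - sg K s w.
Proof.
move=> vs vw; rewrite /sg.
have -> : [set x in s | (val x < val w)%N] =
          v |: [set x in s :\ v | (val x < val w)%N].
  apply/setP=> x; rewrite !inE; case: (x =P v) => [->|]; by rewrite ?vs ?vw.
by rewrite cardsU1 !inE eqxx /= add1n exprS mulN1r opprK.
Qed.

Lemma setD2_eq s u (v w : 'I_n) : u \subset s -> s :\: u = [set v; w] ->
  u = (s :\ w) :\ v.
Proof.
move=> us e; apply/setP=> y.
have H : (y \in s :\: u) = (y == v) || (y == w) by rewrite e in_set2.
move: H; rewrite !inE.
case: (boolP (y \in u)) => yu /=.
  rewrite (subsetP us y yu) /= andbT => H; apply/esym; by rewrite -negb_or -H.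
move=> ->; by case: (y == v); case: (y == w).
Qed.

Lemma bd_bd_sum D i s u : is_simplicial_complex D ->
  \sum_(t : {set 'I_n}) bd K D i.+1 s t * bd K D i t u = 0.
Proof.
move=> cD.
pose good := [&& s \in D, u \in D, #|s| == i.+2, #|u| == i & u \subset s].
have Hnz t : bd K D i.+1 s t * bd K D i t u != 0 ->
   good /\ exists2 x, x \in s :\: u & t = s :\ x.
  rewrite mulf_eq0 negb_or => /andP[/bd_nz [sD tD cs ct [x [xs et]]]
                                 /bd_nz [_ uD _ cu [y [yt eu]]]].
  have ut : u \subset t by rewrite eu subD1set.
  have ts : t \subset s by rewrite et subD1set.
  split; first by rewrite /good sD uD cs cu !eqxx (subset_trans ut ts).
  exists x => //; rewrite inE xs andbT; apply/negP => xu.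
  by move: (subsetP ut x xu); rewrite et !inE eqxx.
case: (boolP good) => [/and5P[sD uD /eqP cs /eqP cu us] | ngood]; last first.
  apply: big1 => t _; apply/eqP; apply/negPn/negP => /Hnz [g _].
  by rewrite g in ngood.
have c2 : #|s :\: u| == 2%N.
  by rewrite cardsD (setIidPr us) cs cu -addn2 addKn.
have [v [w [vw e]]] := cards2P _ c2.
wlog lvw : v w vw e / (val v < val w)%N.
  move=> H; case: (ltngtP (val v) (val w)) => [h|h|h].
  - exact: H vw e h.
  - by apply: (H w v); rewrite 1?eq_sym // e setUC.
  - by move: vw; rewrite (val_inj h) eqxx.
have vsu : v \in s :\: u by rewrite e !inE eqxx.
have wsu : w \in s :\: u by rewrite e !inE eqxx orbT.
move: (vsu) (wsu); rewrite !inE => /andP[vu vs] /andP[wu ws].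
have t1D : s :\ w \in D by apply: (cD s) => //; exact: subD1set.
have t2D : s :\ v \in D by apply: (cD s) => //; exact: subD1set.
have ct1 : #|s :\ w| = i.+1 by move: cs; rewrite (cardsD1 w s) ws add1n => -[].
have ct2 : #|s :\ v| = i.+1 by move: cs; rewrite (cardsD1 v s) vs add1n => -[].
have t12 : s :\ w != s :\ v.
  apply/negP => /eqP h; have : v \in s :\ w by rewrite !inE vs andbT.
  by rewrite h !inE eqxx.
have t21 : s :\ v != s :\ w by rewrite eq_sym.
rewrite (bigD1 (s :\ w)) //= (bigD1 (s :\ v)) //= big1; last first.
  move=> t /andP[nt1 nt2]; apply/eqP/negPn/negP => /Hnz [_ [x xsu ex]].
  move: xsu; rewrite e in_set2 => /orP[/eqP exv|/eqP exw].
    by move: nt2; rewrite ex exv eqxx.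
  by move: nt1; rewrite ex exw eqxx.
rewrite (@bd_val K _ _ _ _ _ _ sD t1D cs (erefl _) ws) (@bd_val K _ _ _ _ _ _ sD t2D cs (erefl _) vs).
have e1 : u = (s :\ w) :\ v by exact: setD2_eq us e.
have e2 : u = (s :\ v) :\ w by apply: setD2_eq us _; rewrite e setUC.
rewrite (@bd_val K _ _ _ _ _ _ t1D uD ct1 e1); last by rewrite !inE vs andbT.
rewrite (@bd_val K _ _ _ _ _ _ t2D uD ct2 e2); last by rewrite !inE ws andbT eq_sym.
rewrite (sg_rem_gt _ lvw) (sg_rem_lt vs lvw).
by rewrite addr0 mulrN mulrC subrr.
Qed.

Lemma bnd_bnd D i : is_simplicial_complex D -> bnd K D i.+1 *m bnd K D i = 0.
Proof.
move=> cD; apply/matrixP => r c; rewrite !mxE.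
rewrite (eq_bigr (fun m => bd K D i.+1 (enum_val r) (enum_val m) *
                           bd K D i (enum_val m) (enum_val c))); last first.
  by move=> m _; rewrite !bndE.
by rewrite (sum_enum (fun t => bd K D i.+1 (enum_val r) t * bd K D i t (enum_val c))) bd_bd_sum.
Qed.
End DD.
Section Formula.
Variable K : fieldType.
Variable n : nat.
Implicit Types (D : {set {set 'I_n}}) (s t u : {set 'I_n}).

Lemma projE D i r c : chain_proj K D i r c =
  ((r == c) && (enum_val r \in D) && (#|enum_val r| == i.+1))%:R.
Proof. by rewrite mxE. Qed.

Lemma proj_bnd D i : chain_proj K D i *m bnd K D i = bnd K D i.
Proof.
apply/matrixP => r c; rewrite mxE (bigD1 r) //= big1; last first.
  by move=> m /negPf nm; rewrite projE eq_sym nm /= mul0r.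
rewrite addr0 projE eqxx /=.
case: (boolP ((enum_val r \in D) && (#|enum_val r| == i.+1))) => h.
  by rewrite mul1r.
rewrite mul0r; apply/esym/eqP/negPn/negP; rewrite bndE => /bd_nz [sD _ cs _ _].
by rewrite sD cs eqxx in h.
Qed.

Lemma bnd_proj D i : bnd K D i.+1 *m chain_proj K D i = bnd K D i.+1.
Proof.
apply/matrixP => r c; rewrite mxE (bigD1 c) //= big1; last first.
  by move=> m /negPf nm; rewrite projE nm /= mulr0.
rewrite addr0 projE eqxx /=.
case: (boolP ((enum_val c \in D) && (#|enum_val c| == i.+1))) => h.
  by rewrite mulr1.
rewrite mulr0; apply/esym/eqP/negPn/negP; rewrite bndE => /bd_nz [_ tD _ ct _].
by rewrite tD ct eqxx in h.
Qed.

Lemma h_formula D i : is_simplicial_complex D ->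
  (\rank (rhomology K D i) + \rank (bnd K D i) + \rank (bnd K D i.+1))%N
  = \rank (chain_proj K D i).
Proof.
move=> cD.
have sBZ : (boundaries K D i <= cycles K D i)%MS.
  rewrite /boundaries /cycles sub_capmx; apply/andP; split.
    by rewrite -bnd_proj submxMl.
  by rewrite sub_kermx bnd_bnd.
have e1 := mxrank_cap_compl (cycles K D i) (boundaries K D i).
rewrite (capmx_idPr sBZ) in e1.
have e2 := mxrank_mul_ker (chain_proj K D i) (bnd K D i).
rewrite proj_bnd in e2.
rewrite /rhomology -e2 /cycles -e1 /boundaries.
rewrite /cycles; lia.
Qed.
End Formula.
Section ZR.
Variable F : fieldType.

Definition zr m p (M : 'M[F]_(m, p)) (j : 'I_m) : 'M[F]_(m, p) :=
  \matrix_(r, c) (if r == j then 0 else M r c).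

Lemma zr_sub m p (M : 'M[F]_(m, p)) j : (zr M j <= M)%MS.
Proof.
apply/row_subP => r; case: (eqVneq r j) => [->|nrj].
  have -> : row j (zr M j) = 0 by apply/matrixP => a b; rewrite !mxE eqxx.
  exact: sub0mx.
have -> : row r (zr M j) = row r M by apply/matrixP => a b; rewrite !mxE (negPf nrj).
exact: row_sub.
Qed.

Lemma zr_eq m p (M : 'M[F]_(m, p)) j : (M == zr M j + row j M)%MS.
Proof.
apply/andP; split; last by rewrite addsmx_sub zr_sub row_sub.
apply/row_subP => r; case: (eqVneq r j) => [->|nrj]; first exact: addsmxSr.
have -> : row r M = row r (zr M j) by apply/matrixP => a b; rewrite !mxE (negPf nrj).
by apply: (submx_trans (row_sub r (zr M j))); apply: addsmxSl.
Qed.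

Lemma rank_zr_sub m p (M : 'M[F]_(m, p)) j : (row j M <= zr M j)%MS ->
  \rank (zr M j) = \rank M.
Proof.
move=> h; apply/eqmx_rank; apply/andP; split; first exact: zr_sub.
have /andP[h1 _] := zr_eq M j; apply: submx_trans h1 _.
by rewrite addsmx_sub submx_refl h.
Qed.

Lemma sub_col0 m p (x : 'rV[F]_p) (Z : 'M[F]_(m, p)) c :
  (x <= Z)%MS -> (forall r, Z r c = 0) -> x 0 c = 0.
Proof.
case/submxP => y -> hz; rewrite mxE big1 // => r _; by rewrite hz mulr0.
Qed.

Lemma rank_zr_new m p (M : 'M[F]_(m, p)) j c : M j c != 0 ->
  (forall r, r != j -> M r c = 0) -> \rank M = (\rank (zr M j)).+1.
Proof.
move=> nz h0.
have nsub : ~~ (row j M <= zr M j)%MS.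
  apply/negP => /sub_col0 H.
  have : row j M 0 c = 0.
    apply: H => r; rewrite mxE; case: (eqVneq r j) => // nrj; exact: h0.
  by rewrite mxE => e; rewrite e eqxx in nz.
have r1 : \rank (row j M) = 1%N.
  rewrite rank_rV; case: (eqVneq (row j M) 0) => // e.
  have : row j M 0 c = M j c by rewrite mxE.
  by rewrite e mxE => e2; rewrite -e2 eqxx in nz.
have e := mxrank_sum_cap (zr M j) (row j M).
rewrite -(eqmx_rank (zr_eq M j)) r1 in e.
have c0 : \rank (zr M j :&: row j M) = 0%N.
  have : (zr M j :&: row j M <= row j M)%MS by apply: capmxSr.
  move/mxrank_leqif_sup => [le1 iff1].
  move: le1; rewrite r1 leq_eqVlt ltnS leqn0 => /orP[/eqP e1|/eqP //].
  have : (row j M <= zr M j :&: row j M)%MS by rewrite -iff1 r1 e1.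
  by move=> h; move: nsub; rewrite (submx_trans h (capmxSl _ _)).
by rewrite c0 addn0 addn1 in e.
Qed.
Lemma mul_zr m p (x : 'rV[F]_m) (M : 'M[F]_(m, p)) j : x 0 j = 0 ->
  x *m zr M j = x *m M.
Proof.
move=> x0; apply/matrixP => a b; rewrite !mxE; apply: eq_bigr => r _.
rewrite (ord1 a) mxE; case: (eqVneq r j) => [->|//]; by rewrite x0 !mul0r.
Qed.
End ZR.
Section Collapse.
Variable K : fieldType.
Variable n : nat.
Variable D : {set {set 'I_n}}.
Variables (S : {set 'I_n}) (v : 'I_n) (k : nat).
Hypothesis cD : is_simplicial_complex D.
Hypothesis SD : S \in D.
Hypothesis vS : v \in S.
Hypothesis cS : #|S| = k.+2.
Hypothesis maxS : forall s, s \in D -> S \subset s -> s = S.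
Hypothesis freeS : forall s, s \in D -> S :\ v \subset s -> s = S :\ v \/ s = S.

Let S' := S :\ v.
Let D' := D :\ S :\ S'.

Lemma cS' : #|S'| = k.+1.
Proof. by move: cS; rewrite (cardsD1 v S) vS add1n => -[]. Qed.

Lemma S'D : S' \in D.
Proof. by apply: (cD SD); rewrite subD1set. Qed.

Lemma nSS' : S != S'.
Proof. apply/negP => /eqP e; have h := cS'; rewrite -e cS in h; lia. Qed.

Lemma inD' s : (s \in D') = [&& s != S', s != S & s \in D].
Proof. by rewrite !inE. Qed.

Lemma closedD' : is_simplicial_complex D'.
Proof.
move=> s t; rewrite !inD' => /and3P[nsS' nsS sD] ts.
rewrite (cD sD ts) andbT; apply/andP; split; apply/negP => /eqP et.
  have h : S :\ v \subset s by rewrite -/S' -et.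
  have [e1|e1] := freeS sD h.
    by rewrite e1 eqxx in nsS'.
  by rewrite e1 eqxx in nsS.
have h : S \subset s by rewrite -et.
have e1 := maxS sD h.
by rewrite e1 eqxx in nsS.
Qed.

Lemma bd' i s t : bd K D' i s t =
  if ((i == k.+1) && (s == S)) || ((i == k) && (s == S')) then 0 else bd K D i s t.
Proof.
rewrite /bd !inD'.
case sD: (s \in D); case tD: (t \in D); rewrite ?andbF /= ?if_same //.
case: (eqVneq (#|s|) i.+1) => cs; rewrite ?andbF /= ?if_same //.
case: (eqVneq (#|t|) i) => ct; rewrite ?andbF /= ?if_same //.
case ts: (t \subset s); rewrite ?andbF /= ?if_same //.
rewrite !andbT.
case: (eqVneq s S) => [esS|nsS].
  have -> : i = k.+1 by move: cs; rewrite esS cS => -[].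
  by rewrite esS eqxx andbF.
case: (eqVneq s S') => [esS'|nsS'].
  have -> : i = k by move: cs; rewrite esS' cS' => -[].
  by rewrite esS' eqxx /= andbF orbT.
rewrite !andbF /=.
case: (eqVneq t S) => [etS|ntS].
  have h : S \subset s by rewrite -etS ts.
  have e1 := maxS sD h.
  by rewrite e1 eqxx in nsS.
case: (eqVneq t S') => [etS'|ntS'] //.
have h : S :\ v \subset s by rewrite -/S' -etS'.
by have [e1|e1] := freeS sD h; [rewrite e1 eqxx in nsS' | rewrite e1 eqxx in nsS].
Qed.


Lemma eqrank (r : 'I_(NS n)) (X : {set 'I_n}) : (r == enum_rank X) = (enum_val r == X).
Proof. by rewrite -(inj_eq (@enum_val_inj _ _)) enum_rankK. Qed.

Lemma kk1 : (k == k.+1) = false.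
Proof. by apply/negbTE; rewrite neq_ltn ltnSn. Qed.
Lemma k1k : (k.+1 == k) = false.
Proof. by apply/negbTE; rewrite neq_ltn ltnSn orbT. Qed.

Lemma bnd'_k1 : bnd K D' k.+1 = zr (bnd K D k.+1) (enum_rank S).
Proof.
apply/matrixP => r c; rewrite [LHS]bndE bd' /zr mxE bndE eqrank.
by rewrite eqxx k1k /= orbF.
Qed.

Lemma bnd'_k : bnd K D' k = zr (bnd K D k) (enum_rank S').
Proof.
apply/matrixP => r c; rewrite [LHS]bndE bd' /zr mxE bndE eqrank.
by rewrite eqxx kk1 /=.
Qed.

Lemma bnd'_o i : i != k -> i != k.+1 -> bnd K D' i = bnd K D i.
Proof.
move=> /negbTE h1 /negbTE h2.
by apply/matrixP => r c; rewrite !bndE bd' h1 h2.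
Qed.

Lemma proj'E i r c : chain_proj K D' i r c =
  if ((i == k.+1) && (enum_val r == S)) || ((i == k) && (enum_val r == S'))
  then 0 else chain_proj K D i r c.
Proof.
rewrite !projE inD'.
case: (eqVneq (enum_val r) S) => [eS|nS].
  rewrite eS cS eqSS (negbTE nSS') /= !andbF /= orbF andbT.
  case: (eqVneq i k.+1) => [//|ni].
  case: eqP; rewrite ?andbF ?andbT // => h; by rewrite h eqxx in ni.
case: (eqVneq (enum_val r) S') => [eS'|nS'].
  rewrite eS' cS' eqSS /= !andbF /= andbT.
  case: (eqVneq i k) => [//|ni].
  case: eqP; rewrite ?andbF ?andbT // => h; by rewrite h eqxx in ni.
by rewrite !andbF /=.
Qed.

Lemma rP_k1 : \rank (chain_proj K D k.+1) = (\rank (chain_proj K D' k.+1)).+1.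
Proof.
have -> : chain_proj K D' k.+1 = zr (chain_proj K D k.+1) (enum_rank S).
  by apply/matrixP => r c; rewrite proj'E /zr !mxE eqrank eqxx k1k /= orbF.
apply: (@rank_zr_new _ _ _ _ _ (enum_rank S)).
  by rewrite projE eqxx enum_rankK SD cS eqxx oner_neq0.
by move=> r nr; rewrite projE (negbTE nr).
Qed.

Lemma rP_k : \rank (chain_proj K D k) = (\rank (chain_proj K D' k)).+1.
Proof.
have -> : chain_proj K D' k = zr (chain_proj K D k) (enum_rank S').
  by apply/matrixP => r c; rewrite proj'E /zr !mxE eqrank eqxx kk1 /=.
apply: (@rank_zr_new _ _ _ _ _ (enum_rank S')).
  by rewrite projE eqxx enum_rankK S'D cS' eqxx oner_neq0.
by move=> r nr; rewrite projE (negbTE nr).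
Qed.

Lemma rP_o i : i != k -> i != k.+1 -> chain_proj K D' i = chain_proj K D i.
Proof.
move=> /negbTE h1 /negbTE h2.
by apply/matrixP => r c; rewrite proj'E h1 h2.
Qed.

Lemma sg_neq0 (s : {set 'I_n}) x : sg K s x != 0.
Proof. by rewrite /sg expf_neq0 // oppr_eq0 oner_eq0. Qed.

Lemma bSS' : bd K D k.+1 S S' = sg K S v.
Proof. exact: (@bd_val K _ _ _ _ _ _ SD S'D cS (erefl _) vS). Qed.

Lemma rB_k1 : \rank (bnd K D k.+1) = (\rank (bnd K D' k.+1)).+1.
Proof.
rewrite bnd'_k1; apply: (@rank_zr_new _ _ _ _ _ (enum_rank S')).
  by rewrite bndE !enum_rankK bSS' sg_neq0.
move=> r nr; rewrite bndE enum_rankK; apply/eqP/negPn/negP.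
move=> /bd_nz [sD _ cs _ [x [xs ex]]].
have h : S :\ v \subset enum_val r by rewrite -/S' ex subD1set.
have [e1|e1] := freeS sD h.
  by move: cs; rewrite e1 -/S' cS'; lia.
by move: nr; rewrite eqrank e1 eqxx.
Qed.

Lemma rB_k : \rank (bnd K D' k) = \rank (bnd K D k).
Proof.
rewrite bnd'_k; apply: rank_zr_sub.
set j := enum_rank S'.
set x := row (enum_rank S) (bnd K D k.+1).
have x0 : x *m bnd K D k = 0 by rewrite /x -row_mul bnd_bnd // row0.
have ea : x 0 j = sg K S v by rewrite /x mxE bndE !enum_rankK bSS'.
clearbody x.
set a := x 0 j.
set x' := x - a *: delta_mx 0 j.
have x'0 : x' 0 j = 0 by rewrite /x' !mxE !eqxx mulr1 subrr.
have e : x' *m zr (bnd K D k) j + a *: row j (bnd K D k) = 0.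
  rewrite mul_zr // rowE scalemxAl -mulmxDl /x' subrK; exact: x0.
have -> : row j (bnd K D k) = - a^-1 *: (x' *m zr (bnd K D k) j).
  have anz : a != 0 by rewrite /a ea sg_neq0.
  move/eqP: e; rewrite addrC addr_eq0 => /eqP e.
  by rewrite scaleNr -scalerN -e scalerA mulVf // scale1r.
by rewrite scalemx_sub // submxMl.
Qed.

Lemma collapse_h i : \rank (rhomology K D' i) = \rank (rhomology K D i).
Proof.
have f1 := @h_formula K n D i cD.
have f2 := @h_formula K n D' i closedD'.
case: (eqVneq i k.+1) => [ei|n1].
  subst i.
  have e3 : bnd K D' k.+2 = bnd K D k.+2.
    by apply: bnd'_o; apply/negP => /eqP; lia.
  rewrite rP_k1 rB_k1 in f1; rewrite e3 in f2; lia.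
case: (eqVneq i k) => [ei|n2].
  subst i.
  rewrite rP_k rB_k1 in f1; rewrite rB_k in f2; lia.
rewrite rP_o // bnd'_o // in f2.
case: (eqVneq i.+1 k) => [ei|n3].
  rewrite ei rB_k in f2; rewrite ei in f1; lia.
rewrite bnd'_o // in f2; lia.
Qed.

End Collapse.
Section Deletion.
Variable K : fieldType.
Variable n : nat.

Lemma two_sets (S s : {set 'I_n}) (a : 'I_n) : a \in S ->
  s \subset S -> S :\ a \subset s -> s = S \/ s = S :\ a.
Proof.
move=> aS sS Ss.
case: (boolP (a \in s)) => as_.
  left; apply/eqP; rewrite eqEsubset sS /=.
  by rewrite -(setD1K aS) subUset sub1set as_ Ss.
right; apply/eqP; rewrite eqEsubset Ss andbT subsetD1 sS as_.
by [].
Qed.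

Lemma deletion (D : {set {set 'I_n}}) (x a : 'I_n) :
  is_simplicial_complex D -> a != x ->
  (forall s, s \in D -> x \in s -> a |: s \in D) ->
  forall i, \rank (rhomology K D i) = \rank (rhomology K [set s in D | x \notin s] i).
Proof.
move=> cD ax cone i.
move: {2}#|[set s in D | x \in s]| (leqnn #|[set s in D | x \in s]|) => N.
elim: N D cD cone => [|N IH] D cD cone hN.
  have -> : [set s in D | x \notin s] = D; last by [].
  apply/setP => s; rewrite inE; case: (boolP (s \in D)) => //= sD.
  apply/negP => xs; move: hN; rewrite leqn0 cards_eq0 => /eqP e.
  have : s \in [set s in D | x \in s] by rewrite inE sD xs.
  by rewrite e inE.
case: (eqVneq [set s in D | x \in s] set0) => [e0|ne0].
  apply: IH => //; by rewrite e0 cards0.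
have [s0 s0X] := set0Pn _ ne0.
have [S SX Smax] := arg_maxnP (fun s : {set 'I_n} => #|s|) s0X.
have : S \in [set s in D | x \in s] := SX.
rewrite inE => /andP[SD xS].
have maxS : forall s, s \in D -> S \subset s -> s = S.
  move=> s sD Ss; apply/eqP; rewrite eq_sym eqEcard Ss /=.
  have h : s \in [set s in D | x \in s] by rewrite inE sD (subsetP Ss x xS).
  exact: Smax h.
have aS : a \in S.
  have e := maxS _ (cone _ SD xS) (subsetUr _ _).
  by rewrite -e in_setU1 eqxx.
have xS' : x \in S :\ a by rewrite !inE xS eq_sym ax.
have freeS : forall s, s \in D -> S :\ a \subset s -> s = S :\ a \/ s = S.
  move=> s sD Ss.
  have xs := subsetP Ss x xS'.
  have e := maxS _ (cone _ sD xs).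
  have sS : s \subset S.
    rewrite -e ?subsetUr //.
    by rewrite -(setD1K aS) setUS.
  by have [h|h] := two_sets aS sS Ss; [right|left].
have cS : #|S| = (#|S| - 2).+2.
  have : (2 <= #|S|)%N.
    rewrite (cardsD1 a S) aS (cardsD1 x (S :\ a)) xS' add1n add1n.
    by [].
  lia.
rewrite -(collapse_h K cD SD aS cS maxS freeS i).
have -> : [set s in D | x \notin s] = [set s in D :\ S :\ (S :\ a) | x \notin s].
  apply/setP => s; rewrite !inE.
  case: (boolP (x \in s)) => xs; rewrite ?andbF //= andbT.
  have -> : (s != S) by apply/negP => /eqP e; rewrite e xS in xs.
  have -> : (s != S :\ a) by apply/negP => /eqP e; rewrite e xS' in xs.
  by rewrite andbT.
apply: IH.
- exact: closedD' cD maxS freeS.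
- move=> s; rewrite !inE => /and3P[n1 n2 sD] xs.
  have asD := cone _ sD xs.
  rewrite asD andbT; apply/andP; split.
    apply/negP => /eqP e; have : a \in a |: s by rewrite in_setU1 eqxx.
    by rewrite e !inE eqxx.
  apply/negP => /eqP e.
  have sS : s \subset S by rewrite -e subsetUr.
  have Ss : S :\ a \subset s.
    by rewrite -e; apply/subsetP => y; rewrite !inE => /andP[ya /orP[/eqP yA|//]]; rewrite yA eqxx in ya.
  by have [h|h] := two_sets aS sS Ss; [rewrite h eqxx in n2 | rewrite h eqxx in n1].
- rewrite -ltnS; apply: leq_trans hN; apply: proper_card; apply/properP; split.
    by apply/subsetP => s; rewrite !inE => /andP[/and3P[_ _ ->] ->].
  by exists S; rewrite !inE ?SD ?xS // eqxx /= andbF.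
Qed.
End Deletion.
Section Perm.
Variable K : fieldType.
Variable n : nat.
Variable p : {perm 'I_n}.
Implicit Types (s t : {set 'I_n}).

Lemma mem_pim s y : (p y \in p @: s) = (y \in s).
Proof. exact: mem_imset (@perm_inj _ p). Qed.

Lemma pim_sub s t : (p @: t \subset p @: s) = (t \subset s).
Proof.
apply/idP/idP; last exact: imsetS.
move=> h; apply/subsetP => y yt.
by rewrite -mem_pim (subsetP h) // mem_pim.
Qed.

Lemma pimD s t : p @: s :\: p @: t = p @: (s :\: t).
Proof.
apply/setP => z; rewrite -[z](permKV p) !inE !mem_pim.
by rewrite inE.
Qed.

Lemma card_pim s : #|p @: s| = #|s|.
Proof. exact: card_imset (@perm_inj _ p). Qed.

Lemma card_sep s (P : pred 'I_n) : #|[set w in s | P w]| = (\sum_(w in s) (P w : nat))%N.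
Proof.
rewrite -sum1_card (eq_bigl (fun w => (w \in s) && P w)); last by move=> w; rewrite inE.
rewrite big_mkcondr /=; apply: eq_bigr => w _; by case: (P w).
Qed.


Definition pinv s : nat :=
  (\sum_(u in s) \sum_(w in s) ((val u < val w) && (val (p w) < val (p u))))%N.
Definition eps s : K := (-1) ^+ pinv s.

Lemma pinv_split s v : v \in s -> pinv s =
  (\sum_(w in s) ((val v < val w) && (val (p w) < val (p v))) +
   \sum_(u in s) ((val u < val v) && (val (p v) < val (p u))) + pinv (s :\ v))%N.
Proof.
move=> vs; rewrite /pinv (big_setD1 v vs) /= -addnA; congr (_ + _)%N.
rewrite (eq_bigr (fun u => ((val u < val v) && (val (p v) < val (p u))) +
   \sum_(w in s :\ v) ((val u < val w) && (val (p w) < val (p u))))%N); last first.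
  by move=> u _; rewrite (big_setD1 v vs).
rewrite big_split /=; congr (_ + _)%N.
by rewrite [RHS](big_setD1 v vs) /= ltnn.
Qed.

Lemma sg_pim s v : sg K (p @: s) (p v) =
  (-1) ^+ (\sum_(w in s) (val (p w) < val (p v)))%N.
Proof.
rewrite /sg.
have -> : [set w in p @: s | (val w < val (p v))%N] =
          p @: [set w in s | (val (p w) < val (p v))%N].
  apply/setP => z; rewrite -[z](permKV p) !inE !mem_pim inE.
  by rewrite permKV.
by rewrite card_pim card_sep.
Qed.

Lemma pointwise (w v : 'I_n) :
  (((val w < val v) && (val (p v) < val (p w))) +
   ((val v < val w) && (val (p w) < val (p v))) +
   (val (p w) < val (p v)))%N =
  ((val w < val v) + ((val v < val w) && (val (p w) < val (p v))).*2)%N.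
Proof.
case: (ltngtP (val w) (val v)) => h; case: (ltngtP (val (p w)) (val (p v))) => h' //=.
all: first [by move: h; rewrite (perm_inj (val_inj h')) ltnn | by move: h'; rewrite (val_inj h) ltnn].
Qed.

Lemma key_sign s v : v \in s ->
  eps s * sg K (p @: s) (p v) = sg K s v * eps (s :\ v).
Proof.
move=> vs; rewrite /eps sg_pim /sg card_sep -!exprD (pinv_split vs).
set B := (\sum_(w in s) ((val v < val w) && (val (p w) < val (p v))))%N.
set A := (\sum_(u in s) ((val u < val v) && (val (p v) < val (p u))))%N.
set C := (\sum_(w in s) (val (p w) < val (p v)))%N.
set Dd := (\sum_(w in s) (val w < val v))%N.
have e : (A + B + C = Dd + (B + B))%N.
  rewrite /A /B /C /Dd -!big_split /=; apply: eq_bigr => w _.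
  by rewrite (pointwise w v) -addnn.
have -> : (B + A + pinv (s :\ v) + C = (Dd + pinv (s :\ v)) + (B + B))%N by lia.
by rewrite [in LHS]exprD addnn -mul2n exprM sqrrN expr1n expr1n mulr1.
Qed.


Definition tau (r : 'I_(NS n)) : 'I_(NS n) := enum_rank (p @: enum_val r).

Lemma tau_inj : injective tau.
Proof.
move=> r1 r2 /enum_rank_inj /(imset_inj (@perm_inj _ p)); exact: enum_val_inj.
Qed.

Definition tp : {perm 'I_(NS n)} := perm tau_inj.

Definition Pm : 'M[K]_(NS n) :=
  \matrix_(r, c) (if tp r == c then eps (enum_val r) else 0).

Lemma eps_neq0 s : eps s != 0.
Proof. by rewrite /eps expf_neq0 // oppr_eq0 oner_eq0. Qed.

Lemma Pm_unit : Pm \in unitmx.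
Proof.
have -> : Pm = diag_mx (\row_r eps (enum_val r)) *m perm_mx tp.
  apply/matrixP => r c; rewrite mul_diag_mx !mxE.
  by case: (tp r == c); rewrite ?mulr1 ?mulr0.
rewrite unitmx_mul unitmx_perm andbT unitmxE det_diag unitfE.
by apply/prodf_neq0 => i _; rewrite mxE eps_neq0.
Qed.

Lemma tpE r : enum_val (tp r) = p @: enum_val r.
Proof. by rewrite permE /tau enum_rankK. Qed.

Variables (D D0 : {set {set 'I_n}}).
Hypothesis hD : forall s, (p @: s \in D) = (s \in D0).

Lemma bd_perm i s t : eps s * bd K D i (p @: s) (p @: t) = bd K D0 i s t * eps t.
Proof.
rewrite /bd !hD !card_pim pim_sub.
case: and5P => [[sD tD /eqP cs /eqP ct ts]|_]; last by rewrite mulr0 mul0r.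
have [x [xs xt et est]] := diff1 ts (etrans cs (congr1 S (esym ct))).
rewrite pimD est imset_set1 !big_set1 et.
exact: key_sign.
Qed.

Lemma Pm_bnd i : Pm *m bnd K D i = bnd K D0 i *m Pm.
Proof.
apply/matrixP => r c; rewrite [LHS]mxE [RHS]mxE.
rewrite (bigD1 (tp r)) //= big1 ?addr0; last first.
  by move=> m /negPf nm; rewrite [Pm _ _]mxE eq_sym nm mul0r.
rewrite (bigD1 ((tp^-1)%g c)) //= [X in _ + X]big1 ?addr0; last first.
  move=> m nm; rewrite [Pm _ _]mxE; case: (eqVneq (tp m) c) => [e|_]; last by rewrite mulr0.
  by move: nm; rewrite -e permK eqxx.
rewrite ![Pm _ _]mxE eqxx permKV eqxx.
set t := enum_val ((tp^-1)%g c).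
have ec : enum_val c = p @: t by rewrite /t -tpE permKV.
by rewrite !bndE tpE ec bd_perm.
Qed.

Lemma Pm_proj i : Pm *m chain_proj K D i = chain_proj K D0 i *m Pm.
Proof.
apply/matrixP => r c; rewrite [LHS]mxE [RHS]mxE.
rewrite (bigD1 (tp r)) //= big1 ?addr0; last first.
  by move=> m /negPf nm; rewrite [Pm _ _]mxE eq_sym nm mul0r.
rewrite (bigD1 r) //= [X in _ + X]big1 ?addr0; last first.
  by move=> m /negPf nm; rewrite projE eq_sym nm /= mul0r.
rewrite ![Pm _ _]mxE eqxx !projE eqxx /= tpE hD card_pim.
case: (tp r == c) => /=; last by rewrite !mulr0.
by rewrite mulrC.
Qed.

Lemma rank_Pm_l m (X : 'M[K]_(NS n, m)) : \rank (Pm *m X) = \rank X.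
Proof. by rewrite (eqmxMfull X) // row_full_unit Pm_unit. Qed.

Lemma rank_Pm_r m (X : 'M[K]_(m, NS n)) : \rank (X *m Pm) = \rank X.
Proof. by rewrite mxrankMfree // row_free_unit Pm_unit. Qed.

Lemma perm_h i : is_simplicial_complex D -> is_simplicial_complex D0 ->
  \rank (rhomology K D i) = \rank (rhomology K D0 i).
Proof.
move=> cD cD0.
have f1 := @h_formula K n D i cD.
have f2 := @h_formula K n D0 i cD0.
have e1 : \rank (bnd K D i) = \rank (bnd K D0 i)
  by rewrite -(rank_Pm_l (bnd K D i)) Pm_bnd rank_Pm_r.
have e2 : \rank (bnd K D i.+1) = \rank (bnd K D0 i.+1)
  by rewrite -(rank_Pm_l (bnd K D i.+1)) Pm_bnd rank_Pm_r.
have e3 : \rank (chain_proj K D i) = \rank (chain_proj K D0 i)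
  by rewrite -(rank_Pm_l (chain_proj K D i)) Pm_proj rank_Pm_r.
lia.
Qed.

End Perm.
Section Main.
Variable K : fieldType.
Variable n : nat.
Variables D1 D2 D3 : {set {set 'I_n}}.
Hypotheses (c1 : is_simplicial_complex D1) (c2 : is_simplicial_complex D2)
           (c3 : is_simplicial_complex D3).
Let V := vertex_set (D1 :|: D2 :|: D3).
Implicit Types (A B X s : {set 'I_n}) (D : {set {set 'I_n}}).

Lemma in_cone s X D : reflect (exists2 F, F \in D & s \subset X :|: F) (s \in cone X D).
Proof. rewrite inE; exact: exists_inP. Qed.

Lemma cone_closed X D : is_simplicial_complex (cone X D).
Proof.
move=> s t /in_cone [F FD sF] ts; apply/in_cone; exists F => //.
exact: subset_trans ts sF.
Qed.

Lemma Delta_closed A B : is_simplicial_complex (DeltaAB D1 D2 D3 A B).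
Proof.
move=> s t; rewrite /DeltaAB !in_setU -!orbA => /or3P[h|h|h] ts.
- by rewrite (cone_closed h ts).
- by rewrite (cone_closed h ts) orbT.
- by rewrite (cone_closed h ts) !orbT.
Qed.

Lemma notV x F : x \notin V -> F \in D1 :|: D2 :|: D3 -> x \notin F.
Proof.
move=> xV FD; apply/negP => xF; move/negP: xV; apply.
by apply/bigcupP; exists F.
Qed.

Lemma cone_del X D x : (forall F, F \in D -> x \notin F) -> forall s,
  (s \in cone X D) && (x \notin s) = (s \in cone (X :\ x) D).
Proof.
move=> xD s; apply/idP/idP.
  move=> /andP[/in_cone [F FD sF] xs]; apply/in_cone; exists F => //.
  apply/subsetP => y ys; move: (subsetP sF y ys); rewrite !inE.
  have -> : y != x by apply/negP => /eqP e; rewrite -e ys in xs.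
  by [].
move=> /in_cone [F FD sF]; apply/andP; split.
  apply/in_cone; exists F => //; apply: subset_trans sF _.
  by apply: setSU; exact: subD1set.
apply/negP => xs; move: (subsetP sF x xs); rewrite !inE eqxx /=.
by move/negPf: (xD F FD) => ->.
Qed.

Lemma del_Delta A B x : x \notin V ->
  [set s in DeltaAB D1 D2 D3 A B | x \notin s] = DeltaAB D1 D2 D3 (A :\ x) (B :\ x).
Proof.
move=> xV.
have h1 : forall F, F \in D1 -> x \notin F by move=> F FD; apply: (notV xV); rewrite !inE FD.
have h2 : forall F, F \in D2 -> x \notin F by move=> F FD; apply: (notV xV); rewrite !inE FD orbT.
have h3 : forall F, F \in D3 -> x \notin F by move=> F FD; apply: (notV xV); rewrite !inE FD orbT.
apply/setP => s; rewrite [LHS]inE /DeltaAB !in_setU.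
by rewrite -setDUl -(cone_del _ h1) -(cone_del _ h2) -(cone_del _ h3) !andb_orl.
Qed.

Lemma cone_add X D a s : a \in X -> s \in cone X D -> a |: s \in cone X D.
Proof.
move=> aX /in_cone [F FD sF]; apply/in_cone; exists F => //.
by rewrite subUset sub1set inE aX sF.
Qed.

Lemma cone_x X D x s : (forall F, F \in D -> x \notin F) -> x \in s -> x \notin X ->
  s \notin cone X D.
Proof.
move=> xD xs xX; apply/negP => /in_cone [F FD sF].
by move: (subsetP sF x xs); rewrite inE (negPf xX) (negPf (xD F FD)).
Qed.


Lemma setD1_notin X (x : 'I_n) : x \notin X -> X :\ x = X.
Proof.
move=> xX; apply/setP => y; rewrite !inE; case: (eqVneq y x) => [->|//].
by rewrite (negPf xX).
Qed.

Lemma single_or X (a : 'I_n) : a \in X -> X = [set a] \/ exists2 x, x \in X & x != a.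
Proof.
move=> aX; case: (boolP [exists x in X, x != a]) => [/exists_inP[x xX xa]|h].
  by right; exists x.
left; apply/setP => y; rewrite inE; apply/idP/idP => [yX|/eqP ->//].
by apply/negPn/negP => ya; move/negP: h; apply; apply/exists_inP; exists y.
Qed.

Lemma reduce i N : forall A B, (#|A| + #|B| <= N)%N -> [disjoint A & B] ->
  [disjoint A :|: B & V] -> forall a b, a \in A -> b \in B ->
  \rank (rhomology K (DeltaAB D1 D2 D3 A B) i) =
  \rank (rhomology K (DeltaAB D1 D2 D3 [set a] [set b]) i).
Proof.
elim: N => [|N IH] A B hN dAB dV a b aA bB.
  by move: hN; rewrite (cardsD1 a A) aA; lia.
have hD1 : forall x, x \in A :|: B -> forall F, F \in D1 -> x \notin F.
  move=> x xAB F FD; apply: (notV (negbT (disjointFr dV xAB))).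
  by rewrite !inE FD.
have hD2 : forall x, x \in A :|: B -> forall F, F \in D2 -> x \notin F.
  move=> x xAB F FD; apply: (notV (negbT (disjointFr dV xAB))).
  by rewrite !inE FD orbT.
have [eA|[x xA xa]] := single_or aA; last first.
  have xB : x \notin B by rewrite (disjointFr dAB xA).
  have xAB : x \in A :|: B by rewrite inE xA.
  rewrite (@deletion K n _ x a (@Delta_closed A B)); last first.
  - move=> s; rewrite /DeltaAB !in_setU -!orbA => /or3P[h|h|h] xs.
    + by rewrite (cone_add aA h).
    + by move: h; rewrite (negPf (cone_x (hD2 x xAB) xs xB)).
    + have aAB : a \in A :|: B by rewrite inE aA.
      by rewrite (cone_add aAB h) !orbT.
  - by rewrite eq_sym.
  rewrite del_Delta; last by rewrite (disjointFr dV xAB).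
  rewrite (setD1_notin xB).
  apply: IH => //.
  - by move: hN; rewrite (cardsD1 x A) xA; lia.
  - exact: disjointWl (subD1set A x) dAB.
  - by apply: disjointWl dV; apply: setSU; exact: subD1set.
  - by rewrite !inE aA eq_sym xa.
have [eB|[y yB yb]] := single_or bB; first by rewrite eA eB.
have yA : y \notin A by rewrite (disjointFl dAB yB).
have yAB : y \in A :|: B by rewrite inE yB orbT.
rewrite (@deletion K n _ y b (@Delta_closed A B)); last first.
- move=> s; rewrite /DeltaAB !in_setU -!orbA => /or3P[h|h|h] ys.
  + by move: h; rewrite (negPf (cone_x (hD1 y yAB) ys yA)).
  + by rewrite (cone_add bB h) orbT.
  + have bAB : b \in A :|: B by rewrite inE bB orbT.
    by rewrite (cone_add bAB h) !orbT.
- by rewrite eq_sym.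
rewrite del_Delta; last by rewrite (disjointFr dV yAB).
rewrite (setD1_notin yA).
apply: IH => //.
- by move: hN; rewrite (cardsD1 y B) yB; lia.
- exact: disjointWr (subD1set B y) dAB.
- by apply: disjointWl dV; apply: setUS; exact: subD1set.
- by rewrite !inE bB eq_sym yb.
Qed.

End Main.
Section Final.
Variable K : fieldType.
Variable n : nat.
Variables D1 D2 D3 : {set {set 'I_n}}.
Hypotheses (c1 : is_simplicial_complex D1) (c2 : is_simplicial_complex D2)
           (c3 : is_simplicial_complex D3).
Let V := vertex_set (D1 :|: D2 :|: D3).

Lemma cone_perm (p : {perm 'I_n}) (X : {set 'I_n}) (D : {set {set 'I_n}}) :
  (forall F : {set 'I_n}, F \in D -> p @: F = F) ->
  forall s : {set 'I_n}, (p @: s \in cone (p @: X) D) = (s \in cone X D).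
Proof.
move=> pD s; apply/in_cone/in_cone => [[F FD sF]|[F FD sF]]; exists F => //.
  by move: sF; rewrite -{1}(pD F FD) -imsetU pim_sub.
by rewrite -{1}(pD F FD) -imsetU pim_sub.
Qed.

Lemma swap_h i (a b a' b' : 'I_n) : a \notin V -> b \notin V -> a' \notin V -> b' \notin V ->
  a != b -> a' != b' ->
  \rank (rhomology K (DeltaAB D1 D2 D3 [set a] [set b]) i) =
  \rank (rhomology K (DeltaAB D1 D2 D3 [set a'] [set b']) i).
Proof.
move=> aV bV a'V b'V ab a'b'.
pose b1 := tperm a a' b.
pose p : {perm 'I_n} := (tperm a a' * tperm b1 b')%g.
have b1a' : b1 != a'.
  by apply/negP => /eqP e; move: ab; rewrite -(tpermL a a') -/b1 in e; rewrite (perm_inj e) eqxx.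
have pa : p a = a' by rewrite permM tpermL tpermD // eq_sym.
have pb : p b = b' by rewrite permM -/b1 tpermL.
have pv : forall y, y \in V -> p y = y.
  move=> y yV.
  have ya : a != y by apply/negP => /eqP e; rewrite e yV in aV.
  have ya' : a' != y by apply/negP => /eqP e; rewrite e yV in a'V.
  have yb : b != y by apply/negP => /eqP e; rewrite e yV in bV.
  have yb' : b' != y by apply/negP => /eqP e; rewrite e yV in b'V.
  rewrite permM tpermD // tpermD //.
  rewrite /b1; case: tpermP => _ ; by [].
have pF : forall F, F \in D1 :|: D2 :|: D3 -> p @: F = F.
  move=> F FD; rewrite (@eq_in_imset _ _ p id) ?imset_id // => y yF.
  by apply: pv; apply/bigcupP; exists F.
have e1 : [set a'] = p @: [set a] by rewrite imset_set1 pa.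
have e2 : [set b'] = p @: [set b] by rewrite imset_set1 pb.
have e3 : [set a'] :|: [set b'] = p @: ([set a] :|: [set b]) by rewrite imsetU -e1 -e2.
have hD : forall s : {set 'I_n}, (p @: s \in DeltaAB D1 D2 D3 [set a'] [set b']) =
                    (s \in DeltaAB D1 D2 D3 [set a] [set b]).
  move=> s; rewrite /DeltaAB !in_setU e3 e1 e2 !cone_perm // => F FD; apply: pF;
    by rewrite !inE FD ?orbT.
symmetry; apply: (perm_h K hD); exact: Delta_closed.
Qed.
End Final.

Local Close Scope ring_scope.

Theorem proposition3p4 (K : fieldType) (n : nat) (D1 D2 D3 : {set {set 'I_n}})
  (A B A' B' : {set 'I_n}) :
  is_simplicial_complex D1 -> is_simplicial_complex D2 -> is_simplicial_complex D3 ->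
  A != set0 -> B != set0 -> A' != set0 -> B' != set0 ->
  [disjoint A & B] -> [disjoint A' & B'] ->
  [disjoint A :|: B & vertex_set (D1 :|: D2 :|: D3)] ->
  [disjoint A' :|: B' & vertex_set (D1 :|: D2 :|: D3)] ->
  forall i : nat, (0 < i)%N ->
    mxspace_iso (rhomology K (DeltaAB D1 D2 D3 A B) i)
                (rhomology K (DeltaAB D1 D2 D3 A' B') i).
Proof.
move=> c1 c2 c3 /set0Pn[a aA] /set0Pn[b bB] /set0Pn[a' aA'] /set0Pn[b' bB'] dAB dAB' dV dV' i _.
apply: iso_of_rank.
rewrite (@reduce K n D1 D2 D3 i _ A B (leqnn _) dAB dV a b aA bB).
rewrite (@reduce K n D1 D2 D3 i _ A' B' (leqnn _) dAB' dV' a' b' aA' bB').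
apply: swap_h.
- by rewrite (disjointFr dV) // inE aA.
- by rewrite (disjointFr dV) // inE bB orbT.
- by rewrite (disjointFr dV') // inE aA'.
- by rewrite (disjointFr dV') // inE bB' orbT.
- by apply/negP => /eqP e; rewrite -e in bB; rewrite (disjointFr dAB aA) in bB.
- by apply/negP => /eqP e; rewrite -e in bB'; rewrite (disjointFr dAB' aA') in bB'.
Qed.
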